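(* Let $k>4$ and $v\ge2$ be integers. If an OA$(3,k+1,v)$ exists, then a simple COA$_\lambda(2,2k+1,v)$ exists for every positive integer $\lambda\le v$.
   Context: An OA$_\lambda(t,k,v)$ is a $\lambda v^t\times k$ array over a $v$-set $V$ such that every $t$ columns contain every $t$-tuple exactly $\lambda$ times; OA$(t,k,v)$ means $\lambda=1$. A COA$_\lambda(t,k,v)$ is a $\lambda v^t\times k$ array over $V$ in which every set of $t$ consecutive columns contains every $t$-tuple exactly $\lambda$ times. It is simple if for any two distinct sets of $t$ consecutive columns sharing exactly $i$ columns ($0\le i\le t-1$), the subarray on the $2t-i$ columns of their union contains each $(2t-i)$-tuple at most once. *)

(* Defs.v *)
From mathcomp Require Import all_boot.
Set Implicit Arguments. Unset Strict Implicit. Unset Printing Implicit Defensive.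

(* An N x k array over the v-set 'I_v: A r c is the entry in row r, column c. *)
Definition array (N k v : nat) := 'I_N -> 'I_k -> 'I_v.

(* OA_lam(t,k,v): a (lam * v^t) x k array in which every t (distinct) columns,
   taken in any order c 0, ..., c (t-1), contain every t-tuple exactly lam times. *)
Definition is_OA (lam t k v : nat) (A : array (lam * v ^ t) k v) : Prop :=
  forall c : 'I_t -> 'I_k, injective c ->
  forall x : 'I_t -> 'I_v,
    #|[pred r : 'I_(lam * v ^ t) | [forall j : 'I_t, A r (c j) == x j]]| = lam.

(* COA_lam(t,k,v): every set of t consecutive columns a, a+1, ..., a+t-1
   (given as c : 'I_t -> 'I_k with c j = a + j, which forces a + t <= k)
   contains every t-tuple exactly lam times. *)
Definition is_COA (lam t k v : nat) (A : array (lam * v ^ t) k v) : Prop :=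
  forall c : 'I_t -> 'I_k, (exists a : nat, forall j : 'I_t, val (c j) = a + j) ->
  forall x : 'I_t -> 'I_v,
    #|[pred r : 'I_(lam * v ^ t) | [forall j : 'I_t, A r (c j) == x j]]| = lam.

Definition in_block (t a : nat) (c : nat) : bool := (a <= c) && (c < a + t).

(* Simplicity: for two distinct blocks of t consecutive columns (starting at
   a < b), the subarray on the union of their columns contains every tuple
   at most once, i.e. two distinct rows differ on some column of the union. *)
Definition is_simple_COA (lam t k v : nat) (A : array (lam * v ^ t) k v) : Prop :=
  is_COA A /\
  forall a b : nat, a < b -> a + t <= k -> b + t <= k ->
  forall r r' : 'I_(lam * v ^ t), r != r' ->
    exists c : 'I_k, (in_block t a c || in_block t b c) && (A r c != A r' c).

(* Main.v *)
Require Import Defs.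
From mathcomp Require Import all_boot zify.

Definition sig (k c : nat) : nat :=
  if c %/ 2 + 2 * (c %% 2) < k then c %/ 2 + 2 * (c %% 2)
  else c %/ 2 + 2 * (c %% 2) - k.

Lemma sig_lt k c : 1 < k -> c <= 2 * k -> sig k c < k.
Proof. rewrite /sig => hk hc; case: ifP => h; lia. Qed.

Lemma sig_neq k a : 4 < k -> a < 2 * k -> sig k a != sig k a.+1.
Proof. move=> hk ha; rewrite /sig; case: ifP => h1; case: ifP => h2; lia. Qed.

Lemma sig_edge k a b : 4 < k -> a < b -> b < 2 * k ->
  ((sig k b != sig k a) && (sig k b != sig k a.+1) ||
   (sig k b.+1 != sig k a) && (sig k b.+1 != sig k a.+1)).
Proof.
move=> hk hab hb; rewrite /sig.
case: ifP => h1; case: ifP => h2; case: ifP => h3; case: ifP => h4; lia.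
Qed.

Section S.
Variables (k v : nat) (A : array (1 * v ^ 3) k v).

Lemma oa3_card : is_OA A ->
  forall c1 c2 c3 : 'I_k, c1 != c2 -> c1 != c3 -> c2 != c3 ->
  forall x1 x2 x3 : 'I_v,
   #|[pred r | [&& A r c1 == x1, A r c2 == x2 & A r c3 == x3]]| = 1.
Proof.
move=> hA c1 c2 c3 h12 h13 h23 x1 x2 x3.
pose c := fun j : 'I_3 => nth c1 [:: c1; c2; c3] j.
pose x := fun j : 'I_3 => nth x1 [:: x1; x2; x3] j.
have ic : injective c.
  move=> [[|[|[|i]]] hi] [[|[|[|j]]] hj] //= E; try (by apply: val_inj);
  move: h12 h13 h23; rewrite /c /= in E; rewrite E eqxx //.
apply: etrans (hA c ic x); apply: eq_card => r; rewrite !inE.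
apply/and3P/forallP => [[/eqP e1 /eqP e2 /eqP e3]|H].
  by move=> [[|[|[|j]]] hj] //=; rewrite /c /x /= ?e1 ?e2 ?e3.
by have := H ord0; have := H (@Ordinal 3 1 isT); have := H (@Ordinal 3 2 isT).
Qed.

Lemma oa3_uniq : is_OA A ->
  forall c1 c2 c3 : 'I_k, c1 != c2 -> c1 != c3 -> c2 != c3 ->
  forall r r', A r c1 = A r' c1 -> A r c2 = A r' c2 -> A r c3 = A r' c3 -> r = r'.
Proof.
move=> hA c1 c2 c3 h12 h13 h23 r r' e1 e2 e3.
have := oa3_card hA _ _ _ h12 h13 h23 (A r c1) (A r c2) (A r c3).
move=> /eqP; rewrite eqn_leq => /andP [/card_le1_eqP H _].
by apply: H; rewrite inE ?e1 ?e2 ?e3 !eqxx.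
Qed.

Lemma oa3_fun : is_OA A ->
  forall c1 c2 c3 : 'I_k, c1 != c2 -> c1 != c3 -> c2 != c3 ->
  exists F : 'I_v -> 'I_v -> 'I_v -> 'I_(1 * v ^ 3),
   forall x1 x2 x3, [/\ A (F x1 x2 x3) c1 = x1, A (F x1 x2 x3) c2 = x2 & A (F x1 x2 x3) c3 = x3].
Proof.
move=> hA c1 c2 c3 h12 h13 h23.
have H : forall x1 x2 x3, {r | [&& A r c1 == x1, A r c2 == x2 & A r c3 == x3]}.
  move=> x1 x2 x3; apply: sigW; apply/card_gt0P.
  by rewrite (oa3_card hA _ _ _ h12 h13 h23).
exists (fun x1 x2 x3 => sval (H x1 x2 x3)) => x1 x2 x3.
by case: (H x1 x2 x3) => r /= /and3P [/eqP ? /eqP ? /eqP ?].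
Qed.
End S.

Theorem mainTheorem7 (k v : nat) :
  4 < k -> 2 <= v ->
  (exists A : array (1 * v ^ 3) k.+1 v, is_OA A) ->
  forall lam : nat, 0 < lam -> lam <= v ->
  exists B : array (lam * v ^ 2) (2 * k).+1 v, is_simple_COA B.
Proof.
move=> hk hv [A hA] lam hlam hlv.
pose col0 : 'I_k.+1 := ord0.
pose col1 : 'I_k.+1 := inord 1.
pose col2 : 'I_k.+1 := inord 2.
pose cs (c : nat) : 'I_k.+1 := inord (sig k c).+1.
have v1 : nat_of_ord col1 = 1 by rewrite /col1 inordK //; lia.
have v2 : nat_of_ord col2 = 2 by rewrite /col2 inordK //; lia.
have vcs : forall c, c <= 2 * k -> nat_of_ord (cs c) = (sig k c).+1.
  by move=> c hc; rewrite /cs inordK // ltnS sig_lt //; lia.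
have csneq : forall c c', c <= 2 * k -> c' <= 2 * k -> sig k c != sig k c' -> cs c != cs c'.
  by move=> c c' hc hc' h; rewrite -val_eqE /= !vcs.
have cs0 : forall c, c <= 2 * k -> col0 != cs c.
  by move=> c hc; rewrite -val_eqE /= vcs.
have [F HF] : exists F : 'I_v -> 'I_v -> 'I_v -> 'I_(1 * v ^ 3),
   forall x1 x2 x3, [/\ A (F x1 x2 x3) col0 = x1, A (F x1 x2 x3) col1 = x2 & A (F x1 x2 x3) col2 = x3].
  by apply: oa3_fun => //; rewrite -val_eqE /= ?v1 ?v2.
have HT : #|{: 'I_lam * ('I_v * 'I_v)}| = lam * v ^ 2.
  by rewrite !card_prod !card_ord mulnn.
pose dec (i : 'I_(lam * v ^ 2)) : 'I_lam * ('I_v * 'I_v) := enum_val (cast_ord (esym HT) i).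
pose enc (t : 'I_lam * ('I_v * 'I_v)) : 'I_(lam * v ^ 2) := cast_ord HT (enum_rank t).
have decK : cancel dec enc by move=> i; rewrite /dec /enc enum_valK cast_ordKV.
have encK : cancel enc dec by move=> t; rewrite /dec /enc cast_ordK enum_rankK.
pose Rw i := F (widen_ord hlv (dec i).1) (dec i).2.1 (dec i).2.2.
have Rwinj : injective Rw.
  move=> i i' E; apply: (can_inj decK).
  have := HF (widen_ord hlv (dec i).1) (dec i).2.1 (dec i).2.2; rewrite -/(Rw i) E /Rw.
  have := HF (widen_ord hlv (dec i').1) (dec i').2.1 (dec i').2.2.
  move: (dec i) (dec i') => [s [x y]] [s' [x' y']] /= [b0 b1 b2] [a0 a1 a2].
  have e0 : widen_ord hlv s = widen_ord hlv s' by rewrite -a0 b0.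
  have -> : x = x' by rewrite -a1 b1.
  have -> : y = y' by rewrite -a2 b2.
  by congr (_, _); apply: val_inj; move: e0 => /(congr1 val).
exists (fun i c => A (Rw i) (cs c)); split.
- move=> c [a Ha] x.
  have h0 := Ha ord0; have h1 := Ha (@Ordinal 2 1 isT).
  rewrite /= addn0 in h0; rewrite /= addn1 in h1.
  have ha : a < 2 * k by have := ltn_ord (c (@Ordinal 2 1 isT)); rewrite h1; lia.
  set al := cs a; set be := cs a.+1.
  have hab : al != be by apply: csneq; [lia|lia|apply: sig_neq].
  have [G HG] : exists G : 'I_v -> 'I_(1 * v ^ 3), forall s,
      [/\ A (G s) col0 = s, A (G s) al = x ord0 & A (G s) be = x (@Ordinal 2 1 isT)].
    have [F' HF'] := oa3_fun _ _ _ hA col0 al be (cs0 a (ltnW ha)) (cs0 a.+1 ha) hab.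
    by exists (fun s => F' s (x ord0) (x (@Ordinal 2 1 isT))).
  have E : forall i, [forall j : 'I_2, A (Rw i) (cs (c j)) == x j] =
      (A (Rw i) al == x ord0) && (A (Rw i) be == x (@Ordinal 2 1 isT)).
    move=> i; apply/forallP/andP => [H|[e0 e1] j].
      by split; [have := H ord0 | have := H (@Ordinal 2 1 isT)]; rewrite ?h0 ?h1.
    have := Ha j; case: j => [[|[|j]] hj] //= ->; rewrite ?addn0 ?addn1.
      by have -> : Ordinal hj = ord0 by apply: val_inj.
    by have -> : Ordinal hj = (@Ordinal 2 1 isT) by apply: val_inj.
  pose f (s : 'I_lam) := enc (s, (A (G (widen_ord hlv s)) col1, A (G (widen_ord hlv s)) col2)).
  have finj : injective f by move=> s s' /(congr1 dec); rewrite !encK => -[].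
  have cf : #|f @: [set: 'I_lam]| = lam by rewrite card_imset // cardsT card_ord.
  rewrite -[X in _ = X]cf.
  apply: eq_card => i; rewrite !inE /= E.
  apply/andP/imsetP => [[/eqP e0 /eqP e1] | [s _ ->]].
  + exists (dec i).1; first by rewrite inE.
    have [r0 r1 r2] := HF (widen_ord hlv (dec i).1) (dec i).2.1 (dec i).2.2.
    have eR : Rw i = G (widen_ord hlv (dec i).1).
      have [g0 g1 g2] := HG (widen_ord hlv (dec i).1).
      apply: (oa3_uniq _ _ _ hA col0 al be (cs0 a (ltnW ha)) (cs0 a.+1 ha) hab).
      * by rewrite /Rw r0 g0.
      * by rewrite e0 g1.
      * by rewrite e1 g2.
    by rewrite /f -eR /Rw r1 r2 -!surjective_pairing decK.
  + have eR : Rw (f s) = G (widen_ord hlv s).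
      rewrite /Rw /f encK /=.
      have [g0 g1 g2] := HG (widen_ord hlv s).
      have [r0 r1 r2] := HF (widen_ord hlv s) (A (G (widen_ord hlv s)) col1) (A (G (widen_ord hlv s)) col2).
      by apply: (oa3_uniq _ _ _ hA col0 col1 col2); rewrite ?r0 ?r1 ?r2 ?g0 // -val_eqE /= ?v1 ?v2.
    by rewrite eR; have [_ -> ->] := HG (widen_ord hlv s); rewrite !eqxx.
- move=> a b hab ha hb r r' hrr'.
  case: (boolP [exists c : 'I_(2 * k).+1, (in_block 2 a c || in_block 2 b c) &&
            (A (Rw r) (cs c) != A (Rw r') (cs c))]) => [/existsP [c Hc] | Hn]; first by exists c.
  exfalso.
  have ag : forall c, c <= 2 * k -> in_block 2 a c || in_block 2 b c ->
      A (Rw r) (cs c) = A (Rw r') (cs c).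
    move=> c hc hin; apply/eqP; apply: contraNT Hn => hne; apply/existsP.
    by exists (Ordinal (hc : c < (2 * k).+1)); rewrite /= hin hne.
  have hb' : b < 2 * k by lia.
  have ea := ag a (ltnW (ltn_trans hab hb')) ltac:(rewrite /in_block; lia).
  have ea1 := ag a.+1 (ltn_trans hab hb') ltac:(rewrite /in_block; lia).
  have eb := ag b (ltnW hb') ltac:(rewrite /in_block; lia).
  have eb1 := ag b.+1 hb' ltac:(rewrite /in_block; lia).
  have sn := sig_neq k a hk (ltn_trans hab hb').
  have : Rw r = Rw r'.
    case/orP: (sig_edge k a b hk hab hb') => /andP [n1 n2].
    + apply: (oa3_uniq _ _ _ hA (cs a) (cs a.+1) (cs b)) => //; apply: csneq; lia.
    + apply: (oa3_uniq _ _ _ hA (cs a) (cs a.+1) (cs b.+1)) => //; apply: csneq; lia.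
  by move/Rwinj => e; rewrite e eqxx in hrr'.
Qed.
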